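(* For $k\ge 3$ let $N_k(t)=\mathbb{E}[Z_k(t)]$ be the expected number of vertices of degree $k$ in a Random Apollonian Network after $t$ steps. For every $k \geq 3$ the limit $\lim_{t \to +\infty} \frac{N_k(t)}{t}$ exists. Writing $b_k=\lim_{t \to +\infty} \frac{N_k(t)}{t}$, we have $b_3=\frac{2}{5}$, $b_4=\frac{1}{5}$, $b_5=\frac{4}{35}$, and $b_k = \frac{24}{k(k+1)(k+2)}$ for $k\geq 6$. Furthermore, for all $k \geq 3$ (and all $t\ge 1$), $$ |N_k(t) - b_k t| \leq K, \quad\text{where } K=3.6.$$
   Context: A Random Apollonian Network (RAN) is generated as follows: start (at time $t=0$) with a single triangular face. At each step $t=1,2,\dots$, pick one of the current (bounded) triangular faces uniformly at random, insert a new vertex inside it, and connect it to the three vertices on the boundary of that face, subdividing the face into three new triangular faces. After $t$ steps there are $2t+1$ triangular faces. $Z_k(t)$ denotes the number of vertices of degree exactly $k$ after $t$ steps. *)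

(* Defs.v *)
From Stdlib Require Import Reals Lra Lia List Arith.
Import ListNotations.
Open Scope R_scope.

(* A state of the Random Apollonian Network: number of vertices (labelled
   0 .. nv-1), the list of edges, and the list of bounded triangular faces. *)
Record ran_state := mkState {
  nv : nat;
  edges : list (nat * nat);
  faces : list (nat * nat * nat)
}.

Definition ran_init : ran_state :=
  mkState 3 [(0,1);(0,2);(1,2)]%nat [(0,1,2)]%nat.

Definition ran_step (s : ran_state) (i : nat) : ran_state :=
  let '(a, b, c) := nth i (faces s) (0,0,0)%nat in
  let n := nv s in
  mkState (S n)
    (edges s ++ [(a,n);(b,n);(c,n)])
    (firstn i (faces s) ++ [(a,b,n);(a,c,n);(b,c,n)] ++ skipn (S i) (faces s)).

Fixpoint ran_expect (t : nat) (f : ran_state -> R) (s : ran_state) : R :=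
  match t with
  | O => f s
  | S t' =>
      / INR (length (faces s)) *
      fold_right Rplus 0
        (map (fun i => ran_expect t' f (ran_step s i)) (seq 0 (length (faces s))))
  end.

Definition degree (s : ran_state) (v : nat) : nat :=
  length (filter (fun e => orb (Nat.eqb (fst e) v) (Nat.eqb (snd e) v)) (edges s)).

Definition Zk (k : nat) (s : ran_state) : nat :=
  length (filter (fun v => Nat.eqb (degree s v) k) (seq 0 (nv s))).

Definition Nk (k t : nat) : R := ran_expect t (fun s => INR (Zk k s)) ran_init.

Definition bk (k : nat) : R :=
  match k with
  | 3%nat => 2/5
  | 4%nat => 1/5
  | 5%nat => 4/35
  | _ => 24 / (INR k * INR (k+1) * INR (k+2))
  end.

(* Main.v *)
Require Import Defs.
From Stdlib Require Import Reals Lra Lia List Arith.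
Import ListNotations.
Open Scope R_scope.

Definition RS {A} (l : list A) (f : A -> R) : R := fold_right Rplus 0 (map f l).

Lemma RS_cons {A} x l (f:A->R) : RS (x::l) f = f x + RS l f.
Proof. reflexivity. Qed.
Lemma RS_nil {A} (f:A->R) : RS [] f = 0.
Proof. reflexivity. Qed.
Lemma RS_app {A} l1 l2 (f:A->R) : RS (l1++l2) f = RS l1 f + RS l2 f.
Proof. induction l1; simpl; [rewrite RS_nil; ring|]. rewrite !RS_cons, IHl1; ring. Qed.
Lemma RS_ext_in {A} l (f g:A->R) : (forall x, In x l -> f x = g x) -> RS l f = RS l g.
Proof. intros H. unfold RS. f_equal. apply map_ext_in. auto. Qed.
Lemma RS_plus {A} l (f g : A->R) : RS l (fun x => f x + g x) = RS l f + RS l g.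
Proof. induction l; [rewrite !RS_nil; ring|]. rewrite !RS_cons, IHl; ring. Qed.
Lemma RS_scal {A} l c (f:A->R) : RS l (fun x => c * f x) = c * RS l f.
Proof. induction l; [rewrite !RS_nil; ring|]. rewrite !RS_cons, IHl; ring. Qed.
Lemma RS_const {A} l c : RS l (fun _:A => c) = INR (length l) * c.
Proof. induction l; [rewrite !RS_nil; simpl; ring|]. rewrite !RS_cons, IHl, length_cons, S_INR; ring. Qed.
Lemma RS_le {A} l (f g:A->R) : (forall x, In x l -> f x <= g x) -> RS l f <= RS l g.
Proof. induction l; intros H; [rewrite !RS_nil; lra|]. rewrite !RS_cons.
  assert (f a <= g a) by (apply H; left; auto). assert (RS l f <= RS l g) by (apply IHl; intros; apply H; right; auto). lra. Qed.
Lemma RS_swap {A B} (la:list A) (lb:list B) F :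
  RS la (fun i => RS lb (fun v => F i v)) = RS lb (fun v => RS la (fun i => F i v)).
Proof. induction la.
  - rewrite RS_nil. rewrite (RS_ext_in _ _ (fun _ => 0)) by (intros; apply RS_nil).
    rewrite RS_const; ring.
  - rewrite RS_cons, IHla, <- RS_plus. apply RS_ext_in; intros. rewrite RS_cons; ring. Qed.
Lemma RS_map {A B} (h:A->B) l f : RS (map h l) f = RS l (fun x => f (h x)).
Proof. unfold RS. rewrite map_map. reflexivity. Qed.
Lemma RS_nth {A} (l:list A) d f : RS (seq 0 (length l)) (fun i => f (nth i l d)) = RS l f.
Proof. induction l; [reflexivity|]. simpl length. rewrite <- cons_seq, RS_cons, <- seq_shift, RS_map.
  simpl nth. rewrite IHl, RS_cons. reflexivity. Qed.
Lemma RS_filter {A} (p:A->bool) l : INR (length (filter p l)) = RS l (fun x => if p x then 1 else 0).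
Proof. induction l; [reflexivity|]. rewrite RS_cons. simpl. destruct (p a); simpl length; try rewrite S_INR; lra. Qed.

Definition gstep (f : ran_state -> R) (s : ran_state) : R :=
  / INR (length (faces s)) * RS (seq 0 (length (faces s))) (fun i => f (ran_step s i)).

Lemma E_S t f s : ran_expect (S t) f s =
  / INR (length (faces s)) * RS (seq 0 (length (faces s))) (fun i => ran_expect t f (ran_step s i)).
Proof. reflexivity. Qed.

Lemma E_markov t : forall f s, ran_expect (S t) f s = ran_expect t (gstep f) s.
Proof. induction t; intros; [reflexivity|].
  rewrite E_S, (E_S t). f_equal. apply RS_ext_in; intros; apply IHt. Qed.

Lemma E_ext t : forall f g s, (forall s, f s = g s) -> ran_expect t f s = ran_expect t g s.
Proof. induction t; intros f g s H; [apply H|]. rewrite !E_S. f_equal. apply RS_ext_in; intros; apply IHt; auto. Qed.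

Lemma E_plus t : forall f g s, ran_expect t (fun x => f x + g x) s = ran_expect t f s + ran_expect t g s.
Proof. induction t; intros; [reflexivity|]. rewrite !E_S.
  rewrite (RS_ext_in _ _ (fun i => ran_expect t f (ran_step s i) + ran_expect t g (ran_step s i))) by (intros; apply IHt).
  rewrite RS_plus; ring. Qed.

Lemma E_scal t : forall c f s, ran_expect t (fun x => c * f x) s = c * ran_expect t f s.
Proof. induction t; intros; [reflexivity|]. rewrite !E_S.
  rewrite (RS_ext_in _ _ (fun i => c * ran_expect t f (ran_step s i))) by (intros; apply IHt).
  rewrite RS_scal; ring. Qed.
Definition mem3 (v:nat) (f : nat*nat*nat) : bool :=
  let '(a,b,c) := f in (Nat.eqb a v || Nat.eqb b v || Nat.eqb c v)%bool.
Definition fc (s:ran_state) (v:nat) : nat := length (filter (mem3 v) (faces s)).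

Record Good (m:nat) (s:ran_state) : Prop := {
  G_nv : nv s = (m+3)%nat;
  G_F : length (faces s) = (2*m+1)%nat;
  G_edges : forall e, In e (edges s) -> (fst e < nv s)%nat /\ (snd e < nv s)%nat;
  G_faces : forall a b c, In (a,b,c) (faces s) ->
     (a < nv s /\ b < nv s /\ c < nv s /\ a <> b /\ a <> c /\ b <> c)%nat;
  G_fc : forall v, (v < nv s)%nat -> (fc s v + (if v <? 3 then 1 else 0) = degree s v)%nat;
  G_maxdeg : forall v, (v < nv s)%nat -> (degree s v <= m+2)%nat;
  G_init : m = 0%nat -> s = ran_init;
  G_mindeg : (1 <= m)%nat -> forall v, (v < nv s)%nat -> (3 <= degree s v)%nat
}.

Lemma Good_init : Good 0 ran_init.
Proof. constructor; auto.
  - simpl; intros e [<-|[<-|[<-|[]]]]; simpl; lia.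
  - simpl; intros a b c [H|[]]; inversion H; lia.
  - simpl nv; intros v Hv. destruct v as [|[|[|]]]; try reflexivity; lia.
  - simpl nv; intros v Hv. destruct v as [|[|[|]]]; try (vm_compute; lia); lia.
  - lia.
Qed.

Lemma skipn_nth {A} (l:list A) i d : (i < length l)%nat -> skipn i l = nth i l d :: skipn (S i) l.
Proof. revert i; induction l; intros i Hi; simpl in Hi; [lia|]. destruct i; [reflexivity|].
  simpl. apply IHl. lia. Qed.

Lemma filter_nil_len {A} (p:A->bool) l : (forall x, In x l -> p x = false) -> length (filter p l) = 0%nat.
Proof. induction l; intros H; [reflexivity|]. simpl. rewrite H by (left; auto). apply IHl; intros; apply H; right; auto. Qed.

Lemma In_firstn {A} (x:A) n l : In x (firstn n l) -> In x l.
Proof. intros H. rewrite <- (firstn_skipn n l). apply in_or_app; auto. Qed.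
Lemma In_skipn {A} (x:A) n l : In x (skipn n l) -> In x l.
Proof. intros H. rewrite <- (firstn_skipn n l). apply in_or_app; auto. Qed.

Section Step.
Variables (s : ran_state) (i a b c : nat).
Hypothesis Hnth : nth i (faces s) (0,0,0)%nat = (a,b,c).
Let n := nv s.

Lemma step_nv : nv (ran_step s i) = S n.
Proof. unfold ran_step. rewrite Hnth. reflexivity. Qed.
Lemma step_edges : edges (ran_step s i) = edges s ++ [(a,n);(b,n);(c,n)]%nat.
Proof. unfold ran_step. rewrite Hnth. reflexivity. Qed.
Lemma step_faces : faces (ran_step s i) =
  firstn i (faces s) ++ [(a,b,n);(a,c,n);(b,c,n)]%nat ++ skipn (S i) (faces s).
Proof. unfold ran_step. rewrite Hnth. reflexivity. Qed.

Definition ind3 (a b c v : nat) : nat :=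
  ((if a =? v then 1 else 0) + (if b =? v then 1 else 0) + (if c =? v then 1 else 0))%nat.

Lemma deg_step_old v : v <> n -> degree (ran_step s i) v = (degree s v + ind3 a b c v)%nat.
Proof. intros Hv. unfold degree. rewrite step_edges, filter_app, length_app. f_equal.
  unfold ind3. simpl. rewrite (proj2 (Nat.eqb_neq n v)) by auto.
  destruct (a =? v), (b =? v), (c =? v); simpl; lia. Qed.

Lemma deg_step_new : (forall e, In e (edges s) -> (fst e < n)%nat /\ (snd e < n)%nat) ->
  degree (ran_step s i) n = 3%nat.
Proof. intros He. unfold degree. rewrite step_edges, filter_app, length_app.
  rewrite filter_nil_len. simpl. rewrite Nat.eqb_refl. simpl. rewrite !Bool.orb_true_r. reflexivity.
  intros e Hin. destruct (He e Hin). apply Bool.orb_false_iff; split; apply Nat.eqb_neq; lia. Qed.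

End Step.
Lemma ind3_mem a b c v : a <> b -> a <> c -> b <> c ->
  ind3 a b c v = (if mem3 v (a,b,c) then 1 else 0)%nat.
Proof. intros. unfold ind3, mem3.
  destruct (Nat.eqb_spec a v), (Nat.eqb_spec b v), (Nat.eqb_spec c v); simpl; lia. Qed.

Lemma fc_split s i v : (i < length (faces s))%nat ->
  fc s v = (length (filter (mem3 v) (firstn i (faces s))) +
            (if mem3 v (nth i (faces s) (0,0,0)%nat) then 1 else 0) +
            length (filter (mem3 v) (skipn (S i) (faces s))))%nat.
Proof. intros Hi. unfold fc. rewrite <- (firstn_skipn i (faces s)) at 1.
  rewrite (skipn_nth _ _ (0,0,0)%nat Hi). rewrite filter_app, length_app. simpl.
  destruct (mem3 v _); simpl; lia. Qed.

Lemma fc_step s i a b c v : (i < length (faces s))%nat ->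
  nth i (faces s) (0,0,0)%nat = (a,b,c) ->
  fc (ran_step s i) v = (length (filter (mem3 v) (firstn i (faces s))) +
      length (filter (mem3 v) [(a,b,nv s);(a,c,nv s);(b,c,nv s)]%nat) +
      length (filter (mem3 v) (skipn (S i) (faces s))))%nat.
Proof. intros Hi Hn. unfold fc. rewrite (step_faces s i a b c Hn).
  rewrite !filter_app, !length_app. lia. Qed.

Lemma Good_step m s i : Good m s -> (i < length (faces s))%nat -> Good (S m) (ran_step s i).
Proof. intros G Hi.
  destruct (nth i (faces s) (0,0,0)%nat) as [[a b] c] eqn:Hn.
  assert (Hin : In (a,b,c) (faces s)) by (rewrite <- Hn; apply nth_In; auto).
  pose proof (G_faces _ _ G a b c Hin) as (Ha & Hb & Hc & Hab & Hac & Hbc).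
  pose proof (G_nv _ _ G) as Hnv.
  constructor.
  - rewrite (step_nv s i a b c Hn). lia.
  - rewrite (step_faces s i a b c Hn), !length_app, length_firstn, length_skipn.
    rewrite (G_F _ _ G) in *. simpl. lia.
  - rewrite (step_nv s i a b c Hn), (step_edges s i a b c Hn). intros e He.
    apply in_app_or in He as [He|He].
    + destruct (G_edges _ _ G e He); lia.
    + simpl in He. destruct He as [<-|[<-|[<-|[]]]]; simpl; lia.
  - rewrite (step_nv s i a b c Hn), (step_faces s i a b c Hn). intros x y z H.
    apply in_app_or in H as [H|H].
    + apply In_firstn in H. destruct (G_faces _ _ G x y z H); lia.
    + apply in_app_or in H as [H|H].
      * simpl in H. destruct H as [H|[H|[H|[]]]]; inversion H; subst; lia.
      * apply In_skipn in H. destruct (G_faces _ _ G x y z H); lia.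
  - rewrite (step_nv s i a b c Hn). intros v Hv.
    rewrite (fc_step s i a b c v Hi Hn).
    destruct (Nat.eq_dec v (nv s)) as [->|Hne].
    + rewrite (deg_step_new s i a b c Hn (G_edges _ _ G)).
      assert (Z1 : length (filter (mem3 (nv s)) (firstn i (faces s))) = 0%nat).
      { apply filter_nil_len. intros [[x y] z] H. apply In_firstn in H. destruct (G_faces _ _ G x y z H) as (?&?&?&_).
        simpl. apply Bool.orb_false_iff; split; [apply Bool.orb_false_iff; split|]; apply Nat.eqb_neq; lia. }
      assert (Z2 : length (filter (mem3 (nv s)) (skipn (S i) (faces s))) = 0%nat).
      { apply filter_nil_len. intros [[x y] z] H. apply In_skipn in H. destruct (G_faces _ _ G x y z H) as (?&?&?&_).
        simpl. apply Bool.orb_false_iff; split; [apply Bool.orb_false_iff; split|]; apply Nat.eqb_neq; lia. }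
      rewrite Z1, Z2. simpl. rewrite !Nat.eqb_refl. simpl. rewrite !Bool.orb_true_r.
      replace (nv s <? 3) with false by (symmetry; apply Nat.ltb_ge; lia). reflexivity.
    + rewrite (deg_step_old s i a b c Hn v Hne).
      rewrite <- (G_fc _ _ G v) by lia. rewrite (fc_split s i v Hi), Hn.
      rewrite ind3_mem by auto. simpl.
      rewrite (proj2 (Nat.eqb_neq (nv s) v)) by auto.
      destruct (Nat.eqb_spec a v), (Nat.eqb_spec b v), (Nat.eqb_spec c v); simpl; lia.
  - rewrite (step_nv s i a b c Hn). intros v Hv.
    destruct (Nat.eq_dec v (nv s)) as [->|Hne].
    + rewrite (deg_step_new s i a b c Hn (G_edges _ _ G)). lia.
    + rewrite (deg_step_old s i a b c Hn v Hne), ind3_mem by auto.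
      pose proof (G_maxdeg _ _ G v ltac:(lia)). destruct (mem3 v _); lia.
  - lia.
  - intros _ v Hv. rewrite (step_nv s i a b c Hn) in Hv.
    destruct (Nat.eq_dec v (nv s)) as [->|Hne].
    + rewrite (deg_step_new s i a b c Hn (G_edges _ _ G)). lia.
    + rewrite (deg_step_old s i a b c Hn v Hne).
      destruct m.
      * pose proof (G_init _ _ G eq_refl) as ->.
        simpl in Hi. assert (i = 0%nat) by lia. subst i. simpl in Hn. inversion Hn; subst.
        simpl in Hv, Hne. destruct v as [|[|[|]]]; try (vm_compute; lia); lia.
      * pose proof (G_mindeg _ _ G ltac:(lia) v ltac:(lia)). lia.
Qed.
Lemma in_seq0 x n : In x (seq 0 n) -> (x < n)%nat.
Proof. intros H. apply in_seq in H. lia. Qed.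

Lemma E_ext_good t : forall m f g s, Good m s -> (forall s', Good (t+m) s' -> f s' = g s') ->
  ran_expect t f s = ran_expect t g s.
Proof. induction t; intros m f g s G H; [apply H; auto|]. rewrite !E_S. f_equal.
  apply RS_ext_in; intros x Hx. apply (IHt (S m)). apply Good_step; auto. apply in_seq0; auto.
  intros s' G'. apply H. rewrite Nat.add_succ_r in G'. auto. Qed.

Lemma E_const t : forall m c s, Good m s -> ran_expect t (fun _ => c) s = c.
Proof. induction t; intros m c s G; [reflexivity|]. rewrite E_S.
  rewrite (RS_ext_in _ _ (fun _ => c)).
  - rewrite RS_const, length_seq. rewrite (G_F _ _ G). field. apply not_0_INR. lia.
  - intros x Hx. apply (IHt (S m)). apply Good_step; auto. apply in_seq0; auto. Qed.

Lemma E_mono t : forall m f g s, Good m s -> (forall s', Good (t+m) s' -> f s' <= g s') ->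
  ran_expect t f s <= ran_expect t g s.
Proof. induction t; intros m f g s G H; [apply H; auto|]. rewrite !E_S.
  apply Rmult_le_compat_l.
  - left. apply Rinv_0_lt_compat. apply lt_0_INR. rewrite (G_F _ _ G). lia.
  - apply RS_le; intros x Hx. apply (IHt (S m)). apply Good_step; auto. apply in_seq0; auto.
    intros s' G'. apply H. rewrite Nat.add_succ_r in G'. auto. Qed.

Definition ib (b:bool) : R := if b then 1 else 0.
Definition Ord (j:nat) (s:ran_state) : R := RS (seq 0 3) (fun v => ib (degree s v =? j)).

Lemma Zk_RS k s : INR (Zk k s) = RS (seq 0 (nv s)) (fun v => ib (degree s v =? k)).
Proof. unfold Zk. rewrite RS_filter. reflexivity. Qed.

Lemma Zk_step m s i k : Good m s -> (i < length (faces s))%nat -> (1 <= k)%nat ->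
  INR (Zk k (ran_step s i)) =
  RS (seq 0 (nv s)) (fun v => ib (degree s v =? k) +
      ib (mem3 v (nth i (faces s) (0,0,0)%nat)) *
      (ib (degree s v =? (k-1)) - ib (degree s v =? k))) + ib (k =? 3).
Proof. intros G Hi Hk.
  destruct (nth i (faces s) (0,0,0)%nat) as [[a b] c] eqn:Hn.
  assert (Hin : In (a,b,c) (faces s)) by (rewrite <- Hn; apply nth_In; auto).
  pose proof (G_faces _ _ G a b c Hin) as (Ha & Hb & Hc & Hab & Hac & Hbc).
  rewrite Zk_RS, (step_nv s i a b c Hn), seq_S, RS_app, RS_cons, RS_nil. simpl (0 + nv s)%nat.
  rewrite (deg_step_new s i a b c Hn (G_edges _ _ G)), Nat.eqb_sym, Rplus_0_r. f_equal.
  apply RS_ext_in. intros v Hv. apply in_seq0 in Hv.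
  rewrite (deg_step_old s i a b c Hn v ltac:(lia)), ind3_mem by auto.
  unfold ib. destruct (mem3 v (a,b,c)).
  - destruct (Nat.eqb_spec (degree s v + 1) k), (Nat.eqb_spec (degree s v) (k-1)),
      (Nat.eqb_spec (degree s v) k); lia || lra.
  - rewrite Nat.add_0_r. lra.
Qed.

Lemma gstep_Zk m s k : Good m s -> (1 <= k)%nat ->
  gstep (fun s => INR (Zk k s)) s = INR (Zk k s) + ib (k =? 3) +
    / INR (length (faces s)) * RS (seq 0 (nv s)) (fun v => INR (fc s v) *
      (ib (degree s v =? (k-1)) - ib (degree s v =? k))).
Proof. intros G Hk. unfold gstep.
  set (F := length (faces s)). set (n := nv s).
  set (A := fun v => ib (degree s v =? k)).
  set (D := fun v => ib (degree s v =? (k-1)) - ib (degree s v =? k)).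
  set (M := fun i v => ib (mem3 v (nth i (faces s) (0,0,0)%nat))).
  rewrite (RS_ext_in _ _ (fun i => (RS (seq 0 n) A + ib (k =? 3)) + RS (seq 0 n) (fun v => M i v * D v))).
  2:{ intros i Hi. apply in_seq0 in Hi. rewrite (Zk_step m s i k G Hi Hk). fold n.
      rewrite RS_plus. unfold A, M, D. ring. }
  rewrite RS_plus, RS_const, length_seq, RS_swap.
  rewrite (RS_ext_in (seq 0 n) (fun v => RS (seq 0 F) (fun i => M i v * D v)) (fun v => INR (fc s v) * D v)).
  2:{ intros v Hv. rewrite (RS_ext_in _ _ (fun i => D v * M i v)) by (intros; ring).
      rewrite RS_scal. unfold M. unfold F.
      rewrite (RS_nth (faces s) (0,0,0)%nat (fun x => ib (mem3 v x))).
      unfold fc. rewrite RS_filter. unfold ib. ring. }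
  replace (RS (seq 0 n) A) with (INR (Zk k s)) by (unfold A, n; rewrite Zk_RS; reflexivity). unfold D. fold n. unfold F. field. apply not_0_INR. rewrite (G_F _ _ G). lia.
Qed.

Lemma W_lemma m s j : Good m s ->
  RS (seq 0 (nv s)) (fun v => INR (fc s v) * ib (degree s v =? j)) = INR j * INR (Zk j s) - Ord j s.
Proof. intros G.
  rewrite (RS_ext_in _ _ (fun v => INR j * ib (degree s v =? j) + (-1) * (ib (v <? 3) * ib (degree s v =? j)))).
  2:{ intros v Hv. apply in_seq0 in Hv. pose proof (G_fc _ _ G v Hv) as E.
      assert (E' : INR (fc s v) = INR (degree s v) - ib (v <? 3)).
      { rewrite <- E, plus_INR. unfold ib. destruct (v <? 3); simpl; ring. }
      rewrite E'. unfold ib. destruct (Nat.eqb_spec (degree s v) j); [subst|]; ring. }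
  rewrite RS_plus, RS_scal, RS_scal, Zk_RS.
  assert (H : RS (seq 0 (nv s)) (fun v => ib (v <? 3) * ib (degree s v =? j)) = Ord j s).
  { unfold Ord.
  replace (nv s) with (3 + (nv s - 3))%nat by (rewrite (G_nv _ _ G); lia).
  rewrite seq_app, RS_app.
  rewrite (RS_ext_in (seq 0 3) _ (fun v => ib (degree s v =? j))).
  2:{ intros v Hv. apply in_seq0 in Hv. replace (v <? 3) with true by (symmetry; apply Nat.ltb_lt; lia). unfold ib at 1. ring. }
  rewrite (RS_ext_in (seq (0+3) _) _ (fun _ => 0)).
  2:{ intros v Hv. apply in_seq in Hv. replace (v <? 3) with false by (symmetry; apply Nat.ltb_ge; lia). unfold ib at 1. ring. }
  rewrite RS_const. ring. }
  rewrite H. ring.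
Qed.

Lemma gstep_Zk2 m s k : Good m s -> (1 <= k)%nat ->
  gstep (fun s => INR (Zk k s)) s = INR (Zk k s) + ib (k =? 3) +
    / INR (2*m+1) * ((INR (k-1) * INR (Zk (k-1) s) - Ord (k-1) s) - (INR k * INR (Zk k s) - Ord k s)).
Proof. intros G Hk. rewrite (gstep_Zk m s k G Hk), (G_F _ _ G). f_equal. f_equal.
  rewrite (RS_ext_in _ _ (fun v => INR (fc s v) * ib (degree s v =? (k-1)) + (-1) * (INR (fc s v) * ib (degree s v =? k)))) by (intros; ring).
  rewrite RS_plus, RS_scal, !(W_lemma m s) by auto. ring. Qed.
Lemma Nk_3_1 : Nk 3 1 = 4.
Proof. unfold Nk. simpl. field. Qed.
Lemma Nk_4_2 : Nk 4 2 = 3.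
Proof. unfold Nk. simpl. field. Qed.

Definition EO (j t : nat) : R := ran_expect t (Ord j) ran_init.

Lemma Nk_rec t k : (1 <= k)%nat ->
  Nk k (S t) = Nk k t + ib (k =? 3) +
   / INR (2*t+1) * ((INR (k-1) * Nk (k-1) t - EO (k-1) t) - (INR k * Nk k t - EO k t)).
Proof. intros Hk. unfold Nk at 1. rewrite E_markov.
  set (c := / INR (2*t+1)).
  rewrite (E_ext_good t 0 _ (fun s => INR (Zk k s) + (ib (k =? 3) +
      ((c * INR (k-1)) * INR (Zk (k-1) s) + ((-c) * Ord (k-1) s + ((-c * INR k) * INR (Zk k s) + c * Ord k s))))) ran_init Good_init).
  2:{ intros s' G'. rewrite Nat.add_0_r in G'. rewrite (gstep_Zk2 t s' k G' Hk). fold c. ring. }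
  rewrite !E_plus, !E_scal, (E_const t 0 _ _ Good_init). unfold Nk, EO. ring.
Qed.

Lemma Ord_bounds j s : 0 <= Ord j s <= 3.
Proof. unfold Ord, RS. simpl. unfold ib.
  destruct (degree s 0 =? j), (degree s 1 =? j), (degree s 2 =? j); lra. Qed.

Lemma EO_bounds j t : 0 <= EO j t <= 3.
Proof. unfold EO. split.
  - rewrite <- (E_const t 0 0 ran_init Good_init). apply (E_mono t 0); [apply Good_init|].
    intros; apply Ord_bounds.
  - rewrite <- (E_const t 0 3 ran_init Good_init). apply (E_mono t 0); [apply Good_init|].
    intros; apply Ord_bounds. Qed.

Lemma Nk_large k t : (t + 2 < k)%nat -> Nk k t = 0.
Proof. intros H. unfold Nk. rewrite (E_ext_good t 0 _ (fun _ => 0) ran_init Good_init).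
  - apply (E_const t 0 0 _ Good_init).
  - intros s G. rewrite Nat.add_0_r in G. unfold Zk. rewrite filter_nil_len; [reflexivity|].
    intros v Hv. apply in_seq0 in Hv. pose proof (G_maxdeg _ _ G v Hv). apply Nat.eqb_neq. lia. Qed.

Lemma Nk_2 t : (1 <= t)%nat -> Nk 2 t = 0.
Proof. intros H. unfold Nk. rewrite (E_ext_good t 0 _ (fun _ => 0) ran_init Good_init).
  - apply (E_const t 0 0 _ Good_init).
  - intros s G. rewrite Nat.add_0_r in G. unfold Zk. rewrite filter_nil_len; [reflexivity|].
    intros v Hv. apply in_seq0 in Hv. pose proof (G_mindeg _ _ G H v Hv). apply Nat.eqb_neq. lia. Qed.

Lemma bk_ge6 k : (6 <= k)%nat -> bk k = 24 / (INR k * INR (k+1) * INR (k+2)).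
Proof. intros H. do 6 (destruct k as [|k]; [lia|]). reflexivity. Qed.

Definition bprev (k:nat) : R := if k =? 3 then 0 else bk (k-1).

Lemma bk_rel k : (3 <= k)%nat -> (INR k + 2) * bk k = 2 * ib (k =? 3) + (INR k - 1) * bprev k.
Proof. intros H. unfold bprev.
  destruct k as [|[|[|[|[|[|[|k]]]]]]]; try lia; try (simpl; field).
  set (K := S (S (S (S (S (S (S k))))))).
  replace (K =? 3) with false by reflexivity.
  rewrite (bk_ge6 K) by (unfold K; lia). rewrite (bk_ge6 (K-1)) by (unfold K; lia).
  replace (K - 1 + 1)%nat with K by (unfold K; lia).
  replace (K - 1 + 2)%nat with (K+1)%nat by (unfold K; lia).
  rewrite minus_INR by (unfold K; lia). rewrite !plus_INR. simpl (INR 1). simpl (INR 2).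
  replace (K =? 3) with false by reflexivity.
  assert (INR K > 6). { unfold K. rewrite !S_INR. pose proof (pos_INR k). lra. }
  unfold ib. field. repeat split; lra.
Qed.

Lemma bk_bounds k : (4 <= k)%nat -> 0 <= bk k <= 1/5.
Proof. intros H. destruct k as [|[|[|[|[|[|k]]]]]]; try lia; try (simpl; lra).
  rewrite bk_ge6 by lia. set (K := S (S (S (S (S (S k)))))).
  assert (INR K >= 6). { unfold K. rewrite !S_INR. pose proof (pos_INR k). lra. }
  rewrite !plus_INR. simpl (INR 1). simpl (INR 2).
  split. apply Rmult_le_pos; [lra|]. left; apply Rinv_0_lt_compat. apply Rmult_lt_0_compat; [apply Rmult_lt_0_compat|]; lra.
  apply Rmult_le_reg_r with (INR K * (INR K + 1) * (INR K + 2)).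
  apply Rmult_lt_0_compat; [apply Rmult_lt_0_compat|]; lra.
  unfold Rdiv. rewrite Rmult_assoc, Rinv_l. 2: { apply Rgt_not_eq. apply Rmult_lt_0_compat; [apply Rmult_lt_0_compat|]; lra. }
  assert (INR K * (INR K + 1) >= 42) by nra.
  assert (INR K * (INR K + 1) * (INR K + 2) >= 336) by nra. lra.
Qed.
Lemma bk_k k : (4 <= k)%nat -> bk k * INR k <= 1.
Proof. intros H. destruct k as [|[|[|[|[|[|k]]]]]]; try lia; try (simpl; lra).
  rewrite bk_ge6 by lia. set (K := S (S (S (S (S (S k)))))).
  assert (INR K >= 6). { unfold K. rewrite !S_INR. pose proof (pos_INR k). lra. }
  rewrite !plus_INR. simpl (INR 1). replace (INR 2) with 2 by (simpl; ring).
  replace (24 / (INR K * (INR K + 1) * (INR K + 2)) * INR K) with (24 / ((INR K + 1) * (INR K + 2))) by (field; lra).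
  apply Rmult_le_reg_r with ((INR K + 1) * (INR K + 2)). nra.
  replace (24 / ((INR K + 1) * (INR K + 2)) * ((INR K + 1) * (INR K + 2))) with 24 by (field; lra). rewrite Rmult_1_l. assert (0 <= (INR K - 6) * (INR K - 6)) by nra. nra.
Qed.

Lemma abs_bounds x K : Rabs x <= K -> -K <= x <= K.
Proof. intros H. pose proof (Rle_abs x). pose proof (Rle_abs (-x)). rewrite Rabs_Ropp in *. lra. Qed.

Lemma main_bound t : (1 <= t)%nat -> forall k, (3 <= k)%nat -> Rabs (Nk k t - bk k * INR t) <= 36/10.
Proof.
  induction t as [|t IH]; intros Ht k Hk; [lia|].
  destruct (Nat.eq_dec t 0) as [->|Ht0].
  { destruct (Nat.eq_dec k 3) as [->|Hk3].
    - rewrite Nk_3_1. simpl. rewrite Rabs_pos_eq; lra.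
    - rewrite Nk_large by lia. pose proof (bk_bounds k ltac:(lia)). simpl INR.
      rewrite Rabs_left1; lra. }
  specialize (IH ltac:(lia)).
  destruct (le_lt_dec k (S t + 2)) as [Hsmall|Hbig].
  2:{ rewrite Nk_large by lia. pose proof (bk_bounds k ltac:(lia)). pose proof (bk_k k ltac:(lia)).
      assert (INR (S t) <= INR k) by (apply le_INR; lia).
      assert (0 <= bk k * INR (S t)) by (apply Rmult_le_pos; [lra| apply pos_INR]).
      assert (bk k * INR (S t) <= bk k * INR k) by (apply Rmult_le_compat_l; lra).
      rewrite Rabs_left1; lra. }
  destruct (le_lt_dec k (2*t+1)) as [HkF|HkF].
  2:{ assert (t = 1%nat /\ k = 4%nat) as [-> ->] by lia. rewrite Nk_4_2. simpl. rewrite Rabs_pos_eq; lra. }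
  set (T := INR t). set (F := 2*T+1).
  set (b := bk k). set (b' := bprev k). set (d := ib (k =? 3)).
  set (x := Nk k t - b * T). set (y := Nk (k-1) t - b' * T).
  set (w := EO k t - EO (k-1) t). set (c := w + d - b).
  assert (HT : T >= 1) by (unfold T; apply Rle_ge; replace 1 with (INR 1) by reflexivity; apply le_INR; lia).
  assert (HF : F > 0) by (unfold F; lra).
  assert (HkR : 3 <= INR k) by (replace 3 with (INR 3) by (simpl; ring); apply le_INR; lia).
  assert (HkFR : INR k <= F) by (unfold F, T; replace (2 * INR t + 1) with (INR (2*t+1)) by (rewrite plus_INR, mult_INR; simpl; ring); apply le_INR; lia).
  assert (Eq : Nk k (S t) - b * INR (S t) =
     ((F - INR k) * x + (INR k - 1) * y + c) / F + T * (2*d + (INR k - 1)*b' - (INR k + 2)*b) / F).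
  { rewrite (Nk_rec t k ltac:(lia)). fold d. fold b.
    replace (INR (2*t+1)) with F by (unfold F, T; rewrite plus_INR, mult_INR; simpl; ring).
    rewrite S_INR. fold T. rewrite minus_INR by lia. simpl (INR 1).
    unfold c, w, x, y. unfold F. field. unfold T; pose proof (pos_INR t); lra. }
  rewrite Eq. pose proof (bk_rel k Hk) as Hrel. fold b d b' in Hrel.
  replace (T * (2 * d + (INR k - 1) * b' - (INR k + 2) * b) / F) with 0 by (rewrite Hrel; field; lra).
  rewrite Rplus_0_r.
  assert (Hx : -(36/10) <= x <= 36/10) by (apply abs_bounds; apply IH; auto).
  assert (Hy : -(36/10) <= y <= 36/10).
  { destruct (Nat.eq_dec k 3) as [->|Hk3].
    - unfold y, b'. rewrite Nk_2 by lia. unfold bprev. simpl. lra.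
    - unfold y, b', bprev. replace (k =? 3) with false by (symmetry; apply Nat.eqb_neq; auto).
      apply abs_bounds. apply IH. lia. }
  assert (Hc : -(36/10) <= c <= 36/10).
  { pose proof (EO_bounds k t). pose proof (EO_bounds (k-1) t). unfold c, w, d, b.
    destruct (Nat.eq_dec k 3) as [->|Hk3].
    - simpl in *. lra.
    - replace (k =? 3) with false by (symmetry; apply Nat.eqb_neq; auto). pose proof (bk_bounds k ltac:(lia)). simpl. lra. }
  set (num := (F - INR k) * x + (INR k - 1) * y + c).
  assert (Hn : -(36/10) * F <= num <= 36/10 * F).
  { unfold num.
    assert (0 <= (F - INR k) * (36/10 - x)) by (apply Rmult_le_pos; lra).
    assert (0 <= (F - INR k) * (x + 36/10)) by (apply Rmult_le_pos; lra).
    assert (0 <= (INR k - 1) * (36/10 - y)) by (apply Rmult_le_pos; lra).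
    assert (0 <= (INR k - 1) * (y + 36/10)) by (apply Rmult_le_pos; lra).
    lra. }
  apply Rabs_le. split.
  - apply Rmult_le_reg_r with F; [lra|]. unfold Rdiv. rewrite Rmult_assoc, Rinv_l by lra. lra.
  - apply Rmult_le_reg_r with F; [lra|]. unfold Rdiv. rewrite Rmult_assoc, Rinv_l by lra. lra.
Qed.
Theorem mainTheorem3 : forall k : nat, (3 <= k)%nat ->
  Un_cv (fun t => Nk k t / INR t) (bk k) /\
  (forall t : nat, (1 <= t)%nat -> Rabs (Nk k t - bk k * INR t) <= 36/10).
Proof.
  intros k Hk. split; [|intros; apply main_bound; auto].
  intros eps Heps.
  destruct (INR_archimed eps (36/10) Heps) as [N HN].
  exists (S N). intros n Hn. unfold R_dist.
  assert (HnR : INR (S N) <= INR n) by (apply le_INR; lia).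
  assert (Hpos : 0 < INR n) by (rewrite S_INR in HnR; pose proof (pos_INR N); lra).
  replace (Nk k n / INR n - bk k) with ((Nk k n - bk k * INR n) * / INR n) by (field; lra).
  rewrite Rabs_mult, (Rabs_pos_eq (/ INR n)) by (left; apply Rinv_0_lt_compat; auto).
  pose proof (main_bound n ltac:(lia) k Hk) as Hb.
  apply Rmult_lt_reg_r with (INR n); [auto|].
  rewrite Rmult_assoc, Rinv_l by lra.
  rewrite S_INR in HnR.
  assert (eps * INR N <= eps * INR n) by (apply Rmult_le_compat_l; lra).
  lra.
Qed.
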